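(* Let $D$ be a quadratic discriminant and suppose that every rational prime $p$ with $p\le\sqrt{|D|/3}$ (if $D<0$) or $p\le\sqrt{D/5}$ (if $D>0$) that is irreducible in $\mathcal{O}_D$ is also prime in $\mathcal{O}_D$. Then every rational prime number factors as a product of prime elements of $\mathcal{O}_D$.
   Context: A quadratic discriminant is a nonsquare integer $D$ with $D\equiv 0$ or $1\pmod 4$. Write $D=4d+\sigma$ with $\sigma\in\{0,1\}$, let $\tau=\frac{\sigma+\sqrt{D}}{2}$, and $\mathcal{O}_D=\mathbb{Z}[\tau]=\mathbb{Z}+\mathbb{Z}\tau$. In a domain, an element is irreducible if it is nonzero, not a unit, and any factorization of it into two elements has a unit factor; it is prime if it is nonzero, not a unit, and whenever it divides a product it divides one of the factors. *)

(* Defs.v *)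
From mathcomp Require Import all_boot all_algebra.
Set Implicit Arguments. Unset Strict Implicit. Unset Printing Implicit Defensive.
Import GRing.Theory Num.Theory.
Local Open Scope ring_scope.

Definition quad_disc (D : int) : Prop :=
  (~ exists z : int, D = z * z) /\ ((D %% 4)%Z = 0 \/ (D %% 4)%Z = 1).

(* D = 4 d + sigma, sigma in {0,1} *)
Definition qsigma (D : int) : int := (D %% 4)%Z.
Definition qd (D : int) : int := (D %/ 4)%Z.

(* Elements of O_D = Z + Z tau, represented as a + b tau,
   where tau = (sigma + sqrt D)/2 satisfies tau^2 = sigma tau + d. *)
Record OD := mkOD { od_a : int; od_b : int }.

Definition od_zero : OD := mkOD 0 0.
Definition od_one : OD := mkOD 1 0.

(* (a + b tau)(c + e tau) = (ac + be d) + (ae + bc + be sigma) tau *)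
Definition od_mul (D : int) (x y : OD) : OD :=
  mkOD (od_a x * od_a y + od_b x * od_b y * qd D)
       (od_a x * od_b y + od_b x * od_a y + od_b x * od_b y * qsigma D).

Definition od_of_nat (n : nat) : OD := mkOD n%:Z 0.

Definition od_unit (D : int) (x : OD) : Prop := exists y, od_mul D x y = od_one.

Definition od_dvd (D : int) (x y : OD) : Prop := exists z, y = od_mul D x z.

Definition od_irreducible (D : int) (x : OD) : Prop :=
  x <> od_zero /\ ~ od_unit D x /\
  forall y z, x = od_mul D y z -> od_unit D y \/ od_unit D z.

Definition od_prime (D : int) (x : OD) : Prop :=
  x <> od_zero /\ ~ od_unit D x /\
  forall y z, od_dvd D x (od_mul D y z) -> od_dvd D x y \/ od_dvd D x z.

Definition od_prod (D : int) (s : seq OD) : OD := foldr (od_mul D) od_one s.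

Fixpoint od_all_prime (D : int) (s : seq OD) : Prop :=
  match s with
  | [::] => True
  | x :: s' => od_prime D x /\ od_all_prime D s'
  end.

(* Main.v *)
Require Import Defs.
From mathcomp Require Import all_boot all_algebra.
From mathcomp Require Import ring lra zify.
From Stdlib Require Import Classical.
Import GRing.Theory Num.Theory.
Local Open Scope ring_scope.

Definition nrm (D : int) (x : OD) : int :=
  od_a x * od_a x + qsigma D * od_a x * od_b x - qd D * od_b x * od_b x.
Definition cnj (D : int) (x : OD) : OD := mkOD (od_a x + qsigma D * od_b x) (- od_b x).
Definition oneg (x : OD) : OD := mkOD (- od_a x) (- od_b x).

Lemma od_eq (x y : OD) : od_a x = od_a y -> od_b x = od_b y -> x = y.
Proof. by case: x; case: y => /= ? ? ? ? -> ->. Qed.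

Lemma odmulC D x y : od_mul D x y = od_mul D y x.
Proof. case: x y => a b [c e]; apply: od_eq => /=; ring. Qed.
Lemma odmulA D x y z : od_mul D x (od_mul D y z) = od_mul D (od_mul D x y) z.
Proof. case: x y z => a b [c e] [f g]; apply: od_eq => /=; ring. Qed.
Lemma odmul1 D x : od_mul D x od_one = x.
Proof. case: x => a b; apply: od_eq => /=; ring. Qed.
Lemma nrmM D x y : nrm D (od_mul D x y) = nrm D x * nrm D y.
Proof. case: x y => a b [c e]; rewrite /nrm /=; ring. Qed.
Lemma mul_cnj D x : od_mul D x (cnj D x) = mkOD (nrm D x) 0.
Proof. case: x => a b; apply: od_eq; rewrite /nrm /=; ring. Qed.
Lemma nrm_cnj D x : nrm D (cnj D x) = nrm D x.
Proof. case: x => a b; rewrite /nrm /=; ring. Qed.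

Lemma zeuclid (q : nat) a b : prime q -> (q%:Z %| a * b)%Z -> (q%:Z %| a)%Z \/ (q%:Z %| b)%Z.
Proof. by move=> pq; rewrite !dvdzE abszM /= Euclid_dvdM //; case/orP; auto. Qed.

Lemma int_eq1 (a b : int) : a * b = 1 -> a = 1 \/ a = -1.
Proof. by move=> h; have := intUnitRing.unitzPl (etrans (mulrC _ _) h); rewrite qualifE => /orP[/eqP|/eqP]; auto. Qed.

Lemma unit_nrm D x : od_unit D x -> nrm D x = 1 \/ nrm D x = -1.
Proof.
case=> y hy; apply: (@int_eq1 _ (nrm D y)); rewrite -nrmM hy /nrm /=; ring.
Qed.

Lemma nrm_unit D x : nrm D x = 1 \/ nrm D x = -1 -> od_unit D x.
Proof.
case=> h.
- exists (cnj D x); rewrite mul_cnj h; done.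
- exists (oneg (cnj D x)); move: (mul_cnj D x); rewrite h; case: x {h} => a b /=.
  move=> [e1 e2]; apply: od_eq => /=; rewrite /= in e1 e2.
  + by rewrite -[1](opprK 1) -e1; ring.
  + by rewrite -[0]oppr0 -e2; ring.
Qed.

Lemma sgn_cases (N : int) (q : nat) : N = q%:Z \/ N = - q%:Z ->
  exists e : int, e * e = 1 /\ N = e * q%:Z.
Proof. case=> ->; [exists 1 | exists (-1)]; split => //; ring. Qed.

Lemma KL D (x y : int) (q : nat) : prime q ->
  (nrm D (mkOD x y) = q%:Z \/ nrm D (mkOD x y) = - q%:Z) -> od_prime D (mkOD x y).
Proof.
move=> pq hN0; have q1 := prime_gt1 pq.
have [e [he hN]] := sgn_cases _ _ hN0.
set N := nrm D (mkOD x y) in hN hN0 *.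
have Nn0 : N != 0 by rewrite hN mulf_neq0 //; [apply/eqP=> e0; move: he; rewrite e0 mul0r; done | lia].
set d := qd D in N hN hN0 Nn0 *; set s := qsigma D in N hN hN0 Nn0 *.
have hNd : N = x * x + s * x * y - d * y * y by [].
have hy : ~ (q%:Z %| y)%Z.
  move=> /dvdzP [l hl].
  have : (q%:Z %| x * x)%Z.
    apply/dvdzP; exists (e - s * x * l + d * l * l * q%:Z).
    rewrite -[x * x](addrK (s * x * y - d * y * y)) addrA -hNd hN hl; ring.
  move=> hxx; have /dvdzP [k hk] : (q%:Z %| x)%Z by case: (zeuclid _ _ _ pq hxx).
  move: hN; rewrite hNd hk hl => h.
  move: h; set L := (X in X = _).
  have -> : L = q%:Z * (q%:Z * (k * k + s * k * l - d * l * l)) by rewrite /L; ring.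
  rewrite [e * _]mulrC => /(mulfI _) h2. have qn0 : q%:Z != 0 by lia. move: (h2 qn0) => {}h2.
  move: h2; set K := (X in _ * X = _) => h2.
  have : (q%:Z %| 1)%Z.
    apply/dvdzP; exists (K * (q%:Z * K)).
    have -> : 1%Z = e * e by rewrite he.
    by rewrite -h2; ring.
  by rewrite dvdzE /= dvdn1 => /eqP q1'; move: q1; rewrite q1'.
split; last split.
- by move=> h; move: hN0; rewrite /N h /nrm /=; lia.
- by move/unit_nrm; lia.
move=> g h [z hz].
pose lam (w : OD) := od_a w * y - od_b w * x.
have divl : forall w, (q%:Z %| lam w)%Z -> od_dvd D (mkOD x y) w.
  case=> a b /dvdzP [k2 hk2]; rewrite /lam /= in hk2.
  pose c1 := a * (x + s * y) - b * y * d.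
  pose c2 := b * x - a * y.
  have : (q%:Z %| c1 * y)%Z.
    have -> : c1 * y = b * N + (x + s * y) * (a * y - b * x) by rewrite hNd /c1; ring.
    by apply/dvdzP; exists (b * e + (x + s * y) * k2); rewrite hN hk2; ring.
  case/zeuclid => // /dvdzP [k1 hk1].
  exists (mkOD (e * k1) (- e * k2)).
  have e1 : N * (e * k1) = c1 by rewrite hN hk1 -[RHS]mul1r -he; ring.
  have e2 : N * (- e * k2) = c2 by rewrite hN /c2 -opprB hk2 -[RHS]mul1r -he; ring.
  apply: od_eq; apply: (mulfI Nn0) => /=; rewrite -/d -/s.
  + have -> : N * (x * (e * k1) + y * (- e * k2) * d) = x * (N * (e * k1)) + y * (N * (- e * k2)) * d by ring.
    by rewrite e1 e2 hNd /c1 /c2; ring.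
  + have -> : N * (x * (- e * k2) + y * (e * k1) + y * (- e * k2) * s) = x * (N * (- e * k2)) + y * (N * (e * k1)) + y * (N * (- e * k2)) * s by ring.
    by rewrite e1 e2 hNd /c1 /c2; ring.
have l1 : (q%:Z %| lam (od_mul D g h))%Z.
  apply/dvdzP; exists (- e * od_b z); rewrite hz /lam; case: z {hz} => f k /=.
  rewrite -/d -/s; have -> : - e * k * q%:Z = - k * N by rewrite hN; ring.
  rewrite hNd; ring.
have l2 : (q%:Z %| lam g * lam h)%Z.
  have -> : lam g * lam h = lam (od_mul D g h) * y + od_b g * od_b h * N.
    by rewrite /lam hNd; case: g {hz l1} => a b; case: h => c f /=; rewrite -/d -/s; ring.
  case/dvdzP: l1 => w ->; apply/dvdzP; exists (w * y + od_b g * od_b h * e); rewrite hN; ring.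
by case/zeuclid: l2 => // /divl; auto.
Qed.

Lemma nsq_nat (n B : nat) : (0 < B)%N -> forall C, (n * B * B = C * C)%N -> exists z, n = (z * z)%N.
Proof.
elim/ltn_ind: B => B IH B0 C h.
case: (ltngtP B 1) => [|B1|eB1]; first by lia.
- have pp := pdiv_prime B1; set p := pdiv B in pp.
  have pB : (p %| B)%N by apply: pdiv_dvd.
  have pC : (p %| C)%N.
    have : (p %| C * C)%N by rewrite -h dvdn_mull.
    by rewrite Euclid_dvdM // orbb.
  move: pB pC => /dvdnP [B' eB] /dvdnP [C' eC].
  have p0 := prime_gt0 pp; have p1 := prime_gt1 pp.
  apply: (IH B' _ _ C'); [nia | nia |].
  have : ((p * p) * (n * B' * B') = (p * p) * (C' * C'))%N.
    rewrite eB eC in h; rewrite -[RHS]mulnA. lia.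
  move/eqP; rewrite eqn_pmul2l ?muln_gt0 ?p0 //; by move/eqP.
- by exists C; rewrite -h eB1; lia.
Qed.

Lemma nsq_int (D b c : int) : b != 0 -> D * b * b = c * c -> exists z : int, D = z * z.
Proof.
move=> b0 h.
case: (lerP 0 D) => D0; last by nia.
case: D D0 h => [n|n] D0 h; last by [].
have := congr1 absz h; rewrite !abszM /=.
move=> hh; have bp : (0 < `|b|)%N by rewrite absz_gt0.
have [z ->] := nsq_nat _ _ bp _ hh.
by exists z%:Z; rewrite PoszM.
Qed.

Lemma dsig D : quad_disc D -> (qsigma D = 0 \/ qsigma D = 1) /\ D = 4 * qd D + qsigma D.
Proof.
case=> _ h; split; first exact: h.
by rewrite /qd /qsigma {1}(divz_eq D 4) mulrC.
Qed.

Lemma nrm0 D x : quad_disc D -> nrm D x = 0 -> x = od_zero.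
Proof.
move=> hD; have [hs hDe] := dsig _ hD; case: x => a b; rewrite /nrm /= => h0.
have e4 : (2 * a + qsigma D * b) * (2 * a + qsigma D * b) = D * b * b.
  move: hs hDe h0; set s := qsigma D; set d := qd D => hs -> h0.
  have -> : (4 * d + s) * b * b = (4 * d + s) * b * b + 4 * 0 by rewrite mulr0 addr0.
  rewrite -h0; case: hs => ->; ring.
case: (eqVneq b 0) => [b0|b0].
- move: h0; rewrite b0 !mulr0 subr0 addr0 => /eqP; rewrite mulf_eq0 orbb => /eqP ->; done.
- case: hD => hns _; exfalso; apply: hns; exact: (nsq_int _ _ _ b0 (esym e4)).
Qed.

Lemma cnj_mul D p u : od_mul D (cnj D p) (od_mul D p u) = mkOD (nrm D p * od_a u) (nrm D p * od_b u).
Proof. case: p u => a b [c e]; apply: od_eq; rewrite /nrm /=; ring. Qed.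

Lemma mul_cancel D p u v : quad_disc D -> p <> od_zero -> od_mul D p u = od_mul D p v -> u = v.
Proof.
move=> hD p0 h.
have N0 : nrm D p != 0 by apply/eqP => /(nrm0 _ _ hD).
have := cnj_mul D p u; rewrite h cnj_mul => -[/(mulfI N0) e1 /(mulfI N0) e2].
exact: od_eq.
Qed.

Lemma one_mul D x : od_mul D od_one x = x.
Proof. by rewrite odmulC odmul1. Qed.

Definition facts D x := exists s, od_all_prime D s /\ od_prod D s = x.

Lemma od_prod_cat D s1 s2 : od_prod D (s1 ++ s2) = od_mul D (od_prod D s1) (od_prod D s2).
Proof. elim: s1 => [|a s IH] /=; first by rewrite one_mul. by rewrite IH odmulA. Qed.

Lemma all_prime_cat D s1 s2 : od_all_prime D s1 -> od_all_prime D s2 -> od_all_prime D (s1 ++ s2).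
Proof. elim: s1 => [|a s IH] //= [h1 h2] h3; split; auto. Qed.

Lemma facts_mul D x y : facts D x -> facts D y -> facts D (od_mul D x y).
Proof.
case=> s1 [h1 e1] [s2 [h2 e2]]; exists (s1 ++ s2); split; first exact: all_prime_cat.
by rewrite od_prod_cat e1 e2.
Qed.

Lemma facts_prime D x : od_prime D x -> facts D x.
Proof. by move=> h; exists [:: x]; split => //=; rewrite odmul1. Qed.

Lemma irr_norm D (p : nat) : prime p -> (forall w, nrm D w <> p%:Z /\ nrm D w <> - p%:Z) ->
  forall y z, nrm D y * nrm D z = p%:Z * p%:Z -> od_unit D y \/ od_unit D z.
Proof.
move=> pp hw y z h.
have := congr1 absz h; rewrite !abszM /= => h2.
have : (`|nrm D y| %| p ^ 2)%N by rewrite expnS expn1 -h2 dvdn_mulr.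
case/(dvdn_pfactor _ _ pp) => m; case: m => [|[|[|m]]] // _ hm.
- left; apply: nrm_unit; move: hm; rewrite expn0; lia.
- exfalso; have [w1 w2] := hw y; move: hm; rewrite expn1; lia.
- right; apply: nrm_unit.
  have p0 := prime_gt0 pp.
  move: h2; rewrite hm expnS expn1 => h2.
  have h3 : (p * p * `|nrm D z| = p * p * 1)%N by rewrite h2 muln1.
  move/eqP: h3; rewrite eqn_pmul2l ?muln_gt0 ?p0 // => /eqP; lia.
Qed.

Lemma of_natM D (m n : nat) : od_of_nat (m * n) = od_mul D (od_of_nat m) (od_of_nat n).
Proof. apply: od_eq; rewrite /= ?PoszM; ring. Qed.

Lemma facts_nat D (n : nat) : (forall q, prime q -> (q <= n)%N -> facts D (od_of_nat q)) ->
  forall m, (0 < m)%N -> (m <= n)%N -> facts D (od_of_nat m).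
Proof.
move=> hq m; elim/ltn_ind: m => m IH m0 mn.
case: (ltngtP m 1) => [|m1|->]; first by lia.
- have pp := pdiv_prime m1; have hd := pdiv_dvd m.
  have e : m = (pdiv m * (m %/ pdiv m))%N by rewrite mulnC divnK.
  have p1 := prime_gt1 pp.
  rewrite e (of_natM D); apply: facts_mul.
  + apply: hq => //; apply: leq_trans mn; exact: dvdn_leq.
  + apply: IH.
    * rewrite ltn_Pdiv //; lia.
    * rewrite divn_gt0; [exact: dvdn_leq | exact: prime_gt0].
    * apply: leq_trans mn; exact: leq_div.
- by exists [::]; split.
Qed.

Lemma cancel_list D (P : OD) s : quad_disc D -> od_all_prime D s ->
  forall u v, od_mul D (od_prod D s) P = od_mul D u v ->
  exists u' v', P = od_mul D u' v' /\ od_dvd D u' u /\ od_dvd D v' v.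
Proof.
move=> hD; elim: s => [|pi s IH] /=.
  move=> _ u v; rewrite one_mul => ->; exists u, v; split => //; split; exists od_one; by rewrite odmul1.
case=> [[pi0 [_ hpi]] hs] u v e.
rewrite -odmulA in e.
have : od_dvd D pi (od_mul D u v) by exists (od_mul D (od_prod D s) P).
case/hpi => [[u1 hu1]|[v1 hv1]].
- rewrite hu1 -odmulA in e; have e2 := mul_cancel _ _ _ _ hD pi0 e.
  have [u' [v' [h1 [[w hw] h3]]]] := IH hs _ _ e2.
  exists u', v'; split => //; split => //; exists (od_mul D pi w).
  by rewrite hu1 hw odmulA (odmulC D pi u') -odmulA.
- have e' : od_mul D pi (od_mul D (od_prod D s) P) = od_mul D pi (od_mul D u v1).
    by rewrite e hv1 !odmulA (odmulC D u pi).
  have e2 := mul_cancel _ _ _ _ hD pi0 e'.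
  have [u' [v' [h1 [h2 [w hw]]]]] := IH hs _ _ e2.
  exists u', v'; split => //; split => //; exists (od_mul D pi w).
  by rewrite hv1 hw odmulA (odmulC D pi v') -odmulA.
Qed.

Lemma search (c B st : int) : 0 <= c -> c * c < B -> 0 < st ->
  exists k : nat, (c + st * k%:Z) * (c + st * k%:Z) < B /\ B <= (c + st * k.+1%:Z) * (c + st * k.+1%:Z).
Proof.
move=> c0 cB st0.
apply: NNPP => H.
have all : forall n : nat, (c + st * n%:Z) * (c + st * n%:Z) < B.
  elim=> [|n IH]; first by rewrite mulr0 addr0.
  case: (ltrP ((c + st * n.+1%:Z) * (c + st * n.+1%:Z)) B) => // h.
  by exfalso; apply: H; exists n.
have := all `|B|%N.
set n := `|B|%N.
have hn : B <= n%:Z by rewrite /n; lia.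
have : n%:Z <= c + st * n%:Z by nia.
move=> h1 h2.
have : n%:Z * n%:Z < B by nia.
nia.
Qed.

Lemma choose_s (p : nat) (D s d r : int) : (1 < p)%N -> D = 4 * d + s -> (s = 0 \/ s = 1) ->
  ~ (if D < 0 then 3 * (p%:Z) ^+ 2 <= - D else 5 * (p%:Z) ^+ 2 <= D) ->
  exists t, (p%:Z %| t - r)%Z /\ - (4 * (p%:Z * p%:Z)) < (2 * t + s) * (2 * t + s) - D /\
            (2 * t + s) * (2 * t + s) - D < 4 * (p%:Z * p%:Z).
Proof.
move=> p1 hD hs; rewrite expr2.
have pz : 0 < p%:Z by lia.
have er := divz_eq r p%:Z.
set s0 := (r %% p%:Z)%Z in er *; set k0 := (r %/ p%:Z)%Z in er *.
have s00 : 0 <= s0 by apply: modz_ge0; lia.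
have s0p : s0 < p%:Z by apply: ltz_pmod.
case: ifP => hD0 hbig.
- have hb : - D < 3 * (p%:Z * p%:Z) by lia.
  case: (lerP (2 * s0 + s) p%:Z) => hc.
  + exists s0; split.
      by apply/dvdzP; exists (- k0); rewrite er; ring.
    split; nia.
  + exists (s0 - p%:Z); split.
      by apply/dvdzP; exists (- k0 - 1); rewrite er; ring.
    split; nia.
- have hD0' : 0 <= D by lia.
  have hb : D < 5 * (p%:Z * p%:Z) by lia.
  have [|||k [hk1 hk2]] := search (2 * s0 + s) (D + 4 * (p%:Z * p%:Z)) (2 * p%:Z); [lia | nia | lia |].
  exists (s0 + p%:Z * k%:Z); split.
    by apply/dvdzP; exists (k%:Z - k0); rewrite er; ring.
  set u := 2 * (s0 + p%:Z * k%:Z) + s.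
  have eu : u = 2 * s0 + s + 2 * p%:Z * k%:Z by rewrite /u; ring.
  have eu1 : 2 * s0 + s + 2 * p%:Z * k.+1%:Z = u + 2 * p%:Z by rewrite eu intS; ring.
  rewrite eu in hk1 *; rewrite eu1 in hk2.
  have u0 : 0 <= 2 * s0 + s + 2 * p%:Z * k%:Z by nia.
  split; last by lia.
  move: hk1 hk2 u0; rewrite -eu; move=> hk1 hk2 u0.
  case: (ltrP (- (4 * (p%:Z * p%:Z))) (u * u - D)) => // hlo; exfalso.
  have up : p%:Z <= u by nia.
  have : p%:Z * p%:Z <= u * u by nia.
  lia.
Qed.

Lemma nrm_nat D (p : nat) : nrm D (od_of_nat p) = p%:Z * p%:Z.
Proof. rewrite /nrm /=; ring. Qed.

Lemma P_contra D (e : int) (p : nat) z x y : (1 < p)%N ->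
  od_mul D (mkOD (e * p%:Z) 0) z = mkOD x y -> (y = 1 \/ y = -1) -> False.
Proof.
move=> p1 E hy.
have : (p%:Z %| y)%Z.
  apply/dvdzP; exists (e * od_b z); move: E; case: z => za zb [_ <-] /=; ring.
by case: hy => -> ; rewrite dvdzE /= dvdn1 => /eqP p1'; move: p1; rewrite p1'.
Qed.

Lemma p_nzu D (p : nat) : prime p -> od_of_nat p <> od_zero /\ ~ od_unit D (od_of_nat p).
Proof.
move=> pp; have p1 := prime_gt1 pp; split.
- by case; lia.
- by move/unit_nrm; rewrite nrm_nat; nia.
Qed.

Lemma contra_core D (p : nat) : quad_disc D -> prime p ->
  (forall q, prime q -> (q < p)%N -> facts D (od_of_nat q)) ->
  (forall w, nrm D w <> p%:Z /\ nrm D w <> - p%:Z) ->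
  ~ (if D < 0 then 3 * (p%:Z) ^+ 2 <= - D else 5 * (p%:Z) ^+ 2 <= D) ->
  forall beta, ~ od_dvd D (od_of_nat p) beta -> (p%:Z %| nrm D beta)%Z -> False.
Proof.
move=> hD pp IH hw hbig [a b] hnd hpN.
have p1 := prime_gt1 pp.
have [hs hDe] := dsig _ hD.
move: hs hDe hpN hbig; rewrite /nrm /=; set sg := qsigma D; set d := qd D => hs hDe hpN hbig.
have hb : ~ (p%:Z %| b)%Z.
  move=> /dvdzP [kb eb].
  have : (p%:Z %| a * a)%Z.
    case/dvdzP: hpN => kN hkN.
    apply/dvdzP; exists (kN - sg * a * kb + d * kb * b).
    have -> : a * a = (a * a + sg * a * b - d * b * b) - sg * a * b + d * b * b by ring.
    rewrite hkN; subst b; ring.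
  move=> haa; have /dvdzP [ka ea] : (p%:Z %| a)%Z by case: (zeuclid _ _ _ pp haa).
  apply: hnd; exists (mkOD ka kb); apply: od_eq; rewrite /=; subst a b; ring.
have [u [v huv]] : exists u v : int, u * b + v * p%:Z = 1.
  case: (Bezoutz b p%:Z) => u [v h]; exists u, v; rewrite h.
  have : coprime p `|b|%N by rewrite prime_coprime // -[(p %| _)%N]/((p%:Z %| b)%Z); apply/negP.
  by rewrite /coprime gcdnC /gcdz /= => /eqP ->.
set r := a * u.
have hfr : (p%:Z %| r * r + sg * r - d)%Z.
  case/dvdzP: hpN => kN hkN.
  apply/dvdzP; exists (kN * u * u + (sg * r * v - 2 * d * v + d * v * v * p%:Z)).
  have -> : r * r + sg * r - d = (a * a + sg * a * b - d * b * b) * u * u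
     + p%:Z * (sg * r * v - 2 * d * v + d * v * v * p%:Z)
     + (1 - v * p%:Z - u * b) * (sg * r - d * (1 - v * p%:Z + u * b)) by rewrite /r; ring.
  have -> : 1 - v * p%:Z - u * b = 0 by rewrite -huv; ring.
  rewrite hkN; ring.
have [t [ht [lo hi]]] := choose_s p D sg d r p1 hDe hs hbig.
set f := t * t + sg * t - d.
have e4 : 4 * f = (2 * t + sg) * (2 * t + sg) - D by rewrite /f hDe; case: hs => ->; ring.
have hft : (p%:Z %| f)%Z.
  case/dvdzP: ht => k hk; case/dvdzP: hfr => k2 hk2.
  apply/dvdzP; exists (k2 + k * (t + r + sg)).
  have -> : f = (r * r + sg * r - d) + (t - r) * (t + r + sg) by rewrite /f; ring.
  rewrite hk hk2; ring.
case/dvdzP: hft => m hm.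
have f0 : f != 0.
  apply/eqP => f0; case: hD => hns _; apply: hns; exists (2 * t + sg).
  by apply/eqP; rewrite eq_sym -subr_eq0 -e4 f0 mulr0.
have m0 : (0 < `|m|)%N by apply/ltP; move: f0; rewrite hm; lia.
have mp : (`|m| < p)%N by move: lo hi; rewrite -e4 hm; nia.
have [sm [hsm esm]] := facts_nat D `|m| (fun q pq hq => IH q pq (leq_ltn_trans hq mp)) `|m| m0 (leqnn _).
set e : int := if m < 0 then -1 else 1.
have he : e * e = 1 by rewrite /e; case: ifP => _; ring.
have hme : m = e * `|m|%N%:Z by rewrite /e; case: ifP => h; lia.
set P := mkOD (e * p%:Z) 0.
set al := mkOD t 1.
have eq1 : od_mul D (od_prod D sm) P = od_mul D al (cnj D al).
  rewrite esm mul_cnj; apply: od_eq; rewrite /nrm /= -/sg -/d.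
  - have -> : t * t + sg * t * 1 - d * 1 * 1 = f by rewrite /f; ring.
    by rewrite hm [X in _ = X * _]hme; ring.
  - ring.
have [u' [v' [hP [[z1 hz1] [z2 hz2]]]]] := cancel_list D P sm hD hsm al (cnj D al) eq1.
have nP : nrm D u' * nrm D v' = p%:Z * p%:Z.
  rewrite -nrmM -hP /nrm /= -/sg -/d.
  have -> : e * p%:Z * (e * p%:Z) + sg * (e * p%:Z) * 0 - d * 0 * 0 = (e * e) * (p%:Z * p%:Z) by ring.
  by rewrite he mul1r.
case: (irr_norm D p pp hw u' v' nP) => [[w hw']|[w hw']].
- have ev : v' = od_mul D P w by rewrite hP -odmulA (odmulC D v' w) odmulA hw' one_mul.
  apply: (P_contra D e p (od_mul D w z2) (t + sg * 1) (- 1) p1); last by right.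
  by rewrite odmulA -ev -hz2.
- have eu : u' = od_mul D P w by rewrite hP -odmulA hw' odmul1.
  apply: (P_contra D e p (od_mul D w z1) t 1 p1); last by left.
  by rewrite odmulA -eu -hz1.
Qed.

Lemma large_prime D (p : nat) : quad_disc D -> prime p ->
  (forall q, prime q -> (q < p)%N -> facts D (od_of_nat q)) ->
  (forall w, nrm D w <> p%:Z /\ nrm D w <> - p%:Z) ->
  ~ (if D < 0 then 3 * (p%:Z) ^+ 2 <= - D else 5 * (p%:Z) ^+ 2 <= D) ->
  od_prime D (od_of_nat p).
Proof.
move=> hD pp IH hw hbig; have [h1 h2] := p_nzu D p pp.
split => //; split => // g h [z hz].
apply: NNPP => H; have [ng nh] := not_or_and _ _ H.
have : (p%:Z %| nrm D g * nrm D h)%Z.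
  rewrite -nrmM hz nrmM nrm_nat; apply/dvdzP; exists (p%:Z * nrm D z); ring.
case/zeuclid => // hN.
- exact: (contra_core D p hD pp IH hw hbig g ng hN).
- exact: (contra_core D p hD pp IH hw hbig h nh hN).
Qed.

Lemma KL' D w (q : nat) : prime q -> (nrm D w = q%:Z \/ nrm D w = - q%:Z) -> od_prime D w.
Proof. case: w => x y; exact: KL. Qed.

Lemma nrm_oneg D x : nrm D (oneg x) = nrm D x.
Proof. case: x => a b; rewrite /nrm /=; ring. Qed.

Theorem mainTheorem3 (D : int) (hD : quad_disc D)
  (hyp : forall p : nat, prime p ->
     (if D < 0 then 3 * (p%:Z) ^+ 2 <= - D else 5 * (p%:Z) ^+ 2 <= D) ->
     od_irreducible D (od_of_nat p) -> od_prime D (od_of_nat p)) :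
  forall p : nat, prime p ->
    exists s : seq OD, od_all_prime D s /\
                       od_prod D s = od_of_nat p.
Proof.
move=> p; elim/ltn_ind: p => p IH0 pp.
have IH : forall q, prime q -> (q < p)%N -> facts D (od_of_nat q) by move=> q hq lq; exact: IH0.
have p1 := prime_gt1 pp.
case: (classic (exists w, nrm D w = p%:Z \/ nrm D w = - p%:Z)) => [[w hw0]|hno].
- have hwp := KL' D w p pp hw0.
  case: hw0 => hw.
  + have hc : od_prime D (cnj D w) by apply: (KL' D _ p pp); rewrite nrm_cnj; left.
    have := facts_mul D _ _ (facts_prime D _ hwp) (facts_prime D _ hc).
    by rewrite mul_cnj hw.
  + have hc : od_prime D (oneg (cnj D w)) by apply: (KL' D _ p pp); rewrite nrm_oneg nrm_cnj; right.
    have := facts_mul D _ _ (facts_prime D _ hwp) (facts_prime D _ hc).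
    have -> : od_mul D w (oneg (cnj D w)) = od_of_nat p.
      have := mul_cnj D w; rewrite hw; case: w {hw hwp hc} => a b /= [e1 e2].
      apply: od_eq => /=; rewrite /= in e1 e2.
      * by rewrite -[RHS]opprK -e1; ring.
      * by rewrite -[RHS]oppr0 -e2; ring.
    done.
- have hw : forall w, nrm D w <> p%:Z /\ nrm D w <> - p%:Z.
    by move=> w; split => h; apply: hno; exists w; [left|right].
  case: (classic (if D < 0 then 3 * (p%:Z) ^+ 2 <= - D else 5 * (p%:Z) ^+ 2 <= D)) => hs.
  + apply: facts_prime; apply: hyp => //.
    have [h1 h2] := p_nzu D p pp.
    split => //; split => // y z e.
    apply: (irr_norm D p pp hw); by rewrite -nrmM -e nrm_nat.
  + apply: facts_prime; exact: large_prime.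
Qed.
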